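(* Let $G$ be a finite group such that, for some prime $p$, the center $Z(G)$ is a nontrivial $p$-group and, for every element $x\in G$ of order $p$, the centralizer $C_G(x)$ is not a $p$-group. Then the cyclic graph $\Delta(G)$ is connected and $\mathrm{diam}(\Delta(G))\le 6$.
   Context: For a finite group $G$, the cyclic graph $\Delta(G)$ has vertex set $G^{\#}=G\setminus\{1\}$, and distinct vertices $x,y$ are adjacent if and only if the subgroup $\langle x,y\rangle$ is cyclic. The diameter is the maximum graph distance between two vertices. *)

(* Defs.v *)
From mathcomp Require Import all_boot all_fingroup all_solvable pgroup center cyclic.
Set Implicit Arguments. Unset Strict Implicit. Unset Printing Implicit Defensive.
Local Open Scope group_scope.

Definition cyc_adj (gT : finGroupType) (G : {set gT}) : rel gT :=
  fun x y => [&& x \in G^#, y \in G^#, x != y & cyclic <<[set x; y]>>].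

Definition cyc_dist_le (gT : finGroupType) (G : {set gT}) (n : nat) (x y : gT) :=
  exists2 s : seq gT, path (cyc_adj G) x s && (last x s == y) & size s <= n.

Definition cyc_connected (gT : finGroupType) (G : {set gT}) :=
  forall x y, x \in G^# -> y \in G^# -> connect (cyc_adj G) x y.

Definition cyc_diam_le (gT : finGroupType) (G : {set gT}) (n : nat) :=
  forall x y, x \in G^# -> y \in G^# -> cyc_dist_le G n x y.

(* Main.v *)
Require Import Defs.
From mathcomp Require Import all_boot all_fingroup all_solvable pgroup center cyclic.
Local Open Scope group_scope.

Section Aux.
Variables (gT : finGroupType) (G : {group gT}).

Definition wR (a b : gT) := (a == b) || cyc_adj G a b.

Lemma walkR (s : seq gT) (x : gT) :
  path wR x s -> cyc_dist_le G (size s) x (last x s).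
Proof.
rewrite /cyc_dist_le; elim: s x => [|y s IH] x /=.
  by move=> _; exists [::]; rewrite /= ?eqxx.
case/andP=> Rxy Ps.
have [s1 /andP[P1 L1] S1] := IH y Ps.
case/orP: Rxy => [/eqP ->|Axy].
  by exists s1; [rewrite P1 L1 | apply: leqW].
by exists (y :: s1); rewrite /= ?Axy ?P1 ?L1.
Qed.

Lemma wR_sym (a b : gT) : wR a b -> wR b a.
Proof.
rewrite /wR /cyc_adj => /orP[/eqP->|/and4P[Ha Hb Hne Hc]]; first by rewrite eqxx.
by rewrite Ha Hb eq_sym Hne setUC Hc orbT.
Qed.

Lemma wR_cyc (a b : gT) : a \in G^# -> b \in G^# -> cyclic <<[set a; b]>> -> wR a b.
Proof.
move=> Ha Hb Hc; rewrite /wR /cyc_adj Ha Hb Hc.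
by case: (a == b).
Qed.

Lemma cyc_pow (x : gT) k : cyclic <<[set x; x ^+ k]>>.
Proof.
apply: cyclicS (cycle_cyclic x).
rewrite gen_subG; apply/subsetP=> u; rewrite !inE => /orP[]/eqP->.
  exact: cycle_id.
exact: mem_cycle.
Qed.

Lemma cyc_coprime (a b : gT) : commute a b -> coprime #[a] #[b] ->
  cyclic <<[set a; b]>>.
Proof.
move=> cab co; apply: cyclicS (cycle_cyclic (a * b)).
have E := cycleM cab co.
rewrite gen_subG; apply/subsetP=> u; rewrite !inE.
case/orP=> /eqP->.
  have : a \in <[a]> * <[b]> by rewrite -{1}[a]mulg1 mem_mulg ?cycle_id ?group1.
by rewrite -E.
have : b \in <[a]> * <[b]> by rewrite -{1}[b]mul1g mem_mulg ?cycle_id ?group1.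
by rewrite -E.
Qed.

Lemma order_pow_div (x : gT) q : q %| #[x] -> #[x ^+ (#[x] %/ q)] = q.
Proof.
move=> qd; rewrite orderXdiv ?dvdn_div // divnA // mulKn //.
Qed.

Lemma ntG (u : gT) : u \in G -> 1 < #[u] -> u \in G^#.
Proof.
move=> uG o; rewrite !inE uG andbT; apply/eqP=> u1.
by move: o; rewrite u1 order1.
Qed.

Lemma nearz (p : nat) (z : gT) : prime p -> z \in 'Z(G) -> #[z] = p ->
  (forall x, x \in G -> #[x]%N = p -> ~~ p.-group 'C_G[x]) ->
  forall x, x \in G^# -> exists y1 y2, [&& wR x y1, wR y1 y2 & wR y2 z].
Proof.
move=> pp zZ oz HC x.
have /centerP [zG zc] := zZ.
have zcom u : u \in G -> commute u z by move=> uG; apply/esym/zc.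
have zG1 : z \in G^# by apply: ntG zG _; rewrite oz prime_gt1.
move=> xG1; have /setD1P [xn1 xG] := xG1.
have ox : 1 < #[x].
  rewrite ltnNge; apply/negP=> o; move: xn1; rewrite -order_eq1 eqn_leq o.
  by rewrite order_gt0.
pose q := if p %| #[x] then p else pdiv #[x].
have qp : prime q by rewrite /q; case: ifP => _ //; exact: pdiv_prime.
have qd : q %| #[x] by rewrite /q; case: ifP => // _; exact: pdiv_dvd.
pose y := x ^+ (#[x] %/ q).
have oy : #[y] = q by exact: order_pow_div.
have yG1 : y \in G^# by apply: ntG; rewrite ?groupX // oy prime_gt1.
have Rxy : wR x y by apply: wR_cyc => //; exact: cyc_pow.
case pd: (p %| #[x]); last first.
  have qnp : q != p.
    apply/eqP=> e; move: qd; rewrite e pd //.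
  exists y, z; rewrite Rxy /=; apply/andP; split; last by rewrite /wR eqxx.
  apply: wR_cyc => //; apply: cyc_coprime; first by apply: zcom; case/setD1P: yG1.
  by rewrite oy oz prime_coprime // dvdn_prime2 //.
have qe : q = p by rewrite /q pd.
have yG : y \in G by case/setD1P: yG1.
have := HC y yG (etrans oy qe).
rewrite /pgroup /pnat cardG_gt0 /= => /allPn [r rP rnp].
move: rP; rewrite mem_primes => /and3P [rp _ rd].
have [w wC ow] := Cauchy rp rd.
have /setIP [wG /cent1P wy] := wC.
have rnp' : r != p by apply: contra rnp => /eqP->; rewrite inE.
have wG1 : w \in G^# by apply: ntG wG _; rewrite ow prime_gt1.
exists y, w; rewrite Rxy /=; apply/andP; split.
  apply: wR_cyc => //; apply: cyc_coprime; first by [].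
  by rewrite oy ow qe prime_coprime // dvdn_prime2 // eq_sym.
apply: wR_cyc => //; apply: cyc_coprime; first exact: zcom.
by rewrite ow oz prime_coprime // dvdn_prime2 //.
Qed.

End Aux.

Theorem lemma3p2 (gT : finGroupType) (G : {group gT}) (p : nat) :
  prime p ->
  p.-group 'Z(G) -> 'Z(G) != 1 ->
  (forall x, x \in G -> #[x]%N = p -> ~~ p.-group 'C_G[x]) ->
  cyc_connected G /\ cyc_diam_le G 6.
Proof.
move=> pp pZ nZ HC.
have [_ pdZ _] := pgroup_pdiv pZ nZ.
have [z zZ oz] := Cauchy pp pdZ.
have diam : cyc_diam_le G 6.
  move=> x y xG yG.
  have [a1 [a2 /and3P [R1 R2 R3]]] := @nearz gT G p z pp zZ oz HC x xG.
  have [b1 [b2 /and3P [S1 S2 S3]]] := @nearz gT G p z pp zZ oz HC y yG.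
  have := @walkR gT G [:: a1; a2; z; b2; b1; y] x.
  have T1 := @wR_sym gT G _ _ S3.
  have T2 := @wR_sym gT G _ _ S2.
  have T3 := @wR_sym gT G _ _ S1.
  rewrite /= R1 R2 R3 T1 T2 T3 /=; exact.
split=> // x y xG yG.
have [s /andP [Ps /eqP <-] _] := diam x y xG yG.
by apply/connectP; exists s.
Qed.
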